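(* Let $A_1,\dots,A_k\in H_n$ and $B_1,\dots,B_k\in H_m$. There is a completely positive map $\Phi:M_n\to M_m$ with $\Phi(A_j)=B_j$ for $j=1,\dots,k$ if and only if there exist $\gamma>0$ and a unital completely positive map $\Psi:M_{n+1}\to M_m$ with $\Psi(A_j\oplus[0])=\gamma^{-1}B_j$ for $j=1,\dots,k$.
   Context: $H_n$ is the set of $n\times n$ Hermitian matrices; $A\oplus[0]$ denotes the $(n+1)\times(n+1)$ block diagonal matrix with blocks $A$ and the $1\times1$ zero matrix. A linear map is completely positive if all ampliations $I_k\otimes\Phi$ preserve positive semidefiniteness; unital means $\Psi(I_{n+1})=I_m$. *)

(* Defs.v *)
(* Matrices over an arbitrary numClosedFieldType C
   (the complex numbers being the motivating instance). *)
From HB Require Import structures.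
From mathcomp Require Import all_boot all_order all_algebra.
Set Implicit Arguments. Unset Strict Implicit. Unset Printing Implicit Defensive.
Import Order.TTheory GRing.Theory Num.Theory.
Local Open Scope ring_scope.
Local Open Scope sesquilinear_scope.

Definition psdmx {C : numClosedFieldType} (p : nat) (M : 'M[C]_p) : Prop :=
  M \is hermsymmx /\ forall x : 'rV[C]_p, 0 <= (x *m M *m x ^t*) 0 0.

Definition ampl {C : numClosedFieldType} (n m k : nat)
  (Phi : 'M[C]_n -> 'M[C]_m)
  (X : 'M[C]_(\sum_(i < k) n)) : 'M[C]_(\sum_(i < k) m) :=
  \mxblock_(i < k, j < k) Phi (submxblock X i j).

Definition completely_positive {C : numClosedFieldType} (n m : nat)
  (Phi : 'M[C]_n -> 'M[C]_m) : Prop :=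
  forall (k : nat) (X : 'M[C]_(\sum_(i < k) n)), psdmx X -> psdmx (@ampl C n m k Phi X).

Definition unital {C : numClosedFieldType} (n m : nat)
  (Psi : 'M[C]_n -> 'M[C]_m) : Prop := Psi 1%:M = 1%:M.

(* Main.v *)
Require Import Defs.
From HB Require Import structures.
From mathcomp Require Import all_boot all_order all_algebra.
From Stdlib Require Import FunctionalExtensionality.
Set Implicit Arguments. Unset Strict Implicit. Unset Printing Implicit Defensive.
Import Order.TTheory GRing.Theory Num.Theory.
Local Open Scope ring_scope.

Local Open Scope sesquilinear_scope.
Lemma hermP {C : numClosedFieldType} p (M : 'M[C]_p) : M \is hermsymmx <-> M = M ^t*.
Proof. by rewrite is_hermitianmxE /= expr0 scale1r; split => /eqP. Qed.

Lemma tC_mul {C : numClosedFieldType} p q r (A : 'M[C]_(p,q)) (B : 'M[C]_(q,r)) : (A *m B)^t* = B^t* *m A^t*.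
Proof. by rewrite trmx_mul map_mxM. Qed.

Lemma psd_congr {C : numClosedFieldType} p q (M : 'M[C]_(q,p)) X : psdmx X -> psdmx (M *m X *m M^t*).
Proof.
move=> [/hermP hX pX]; split.
  by apply/hermP; rewrite !tC_mul trmxCK -hX mulmxA.
move=> x; have := pX (x *m M); by rewrite tC_mul !mulmxA.
Qed.

Lemma psd_add {C : numClosedFieldType} p (X Y : 'M[C]_p) : psdmx X -> psdmx Y -> psdmx (X + Y).
Proof.
move=> [/hermP hX pX] [/hermP hY pY]; split.
  by apply/hermP; rewrite linearD /= map_mxD -hX -hY.
by move=> x; rewrite mulmxDr mulmxDl mxE addr_ge0.
Qed.

Lemma psd0 {C : numClosedFieldType} p : psdmx (0 : 'M[C]_p).
Proof.
split; first by apply/hermP; rewrite trmx0 map_mx0.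
by move=> x; rewrite mulmx0 mul0mx mxE.
Qed.

Lemma psd1 {C : numClosedFieldType} p : psdmx (1%:M : 'M[C]_p).
Proof.
split; first by apply/hermP; rewrite trmx1 map_mx1.
move=> x; rewrite mulmx1 mxE; apply: sumr_ge0 => i _.
by rewrite !mxE mul_conjC_ge0.
Qed.

Lemma map_mxblock {T U : Type} (f : T -> U) {p q : nat} {p_ : 'I_p -> nat} {q_ : 'I_q -> nat}
  (B_ : forall i j, 'M[T]_(p_ i, q_ j)) :
  (\mxblock_(i, j) B_ i j) ^ f = \mxblock_(i, j) (B_ i j) ^ f.
Proof. by apply/matrixP => i j; rewrite !mxE. Qed.

Lemma map_mxrow {T U : Type} (f : T -> U) {q m : nat} {q_ : 'I_q -> nat}
  (B_ : forall j, 'M[T]_(m, q_ j)) :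
  (\mxrow_j B_ j) ^ f = \mxrow_j (B_ j) ^ f.
Proof. by apply/matrixP => i j; rewrite !mxE. Qed.

Lemma CP_ext {C : numClosedFieldType} n m (F G : 'M[C]_n -> 'M[C]_m) :
  (forall X, F X = G X) -> completely_positive F -> completely_positive G.
Proof. by move=> FG; have -> : F = G by apply: functional_extensionality. Qed.

Lemma CP_add {C : numClosedFieldType} n m (F G : 'M[C]_n -> 'M[C]_m) :
  completely_positive F -> completely_positive G ->
  completely_positive (fun X => F X + G X).
Proof.
move=> hF hG k X hX; rewrite /ampl mxblockD.
exact: psd_add (hF k X hX) (hG k X hX).
Qed.

Lemma CP_zero {C : numClosedFieldType} n m :
  completely_positive (fun X : 'M[C]_n => (0 : 'M[C]_m)).
Proof. by move=> k X _; rewrite /ampl mxblock0; apply: psd0. Qed.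

Lemma CP_sum {C : numClosedFieldType} n m r (F : 'I_r -> 'M[C]_n -> 'M[C]_m) :
  (forall l, completely_positive (F l)) ->
  completely_positive (fun X => \sum_(l < r) F l X).
Proof.
elim: r F => [|r IH] F hF.
  by apply: CP_ext (@CP_zero C n m) => X; rewrite big_ord0.
apply: CP_ext (CP_add (IH (fun l => F (widen_ord (leqnSn r) l)) _) (hF ord_max)).
  by move=> X; rewrite big_ord_recr.
by move=> l; apply: hF.
Qed.

Lemma CP_comp {C : numClosedFieldType} n m p (F : 'M[C]_m -> 'M[C]_p) (G : 'M[C]_n -> 'M[C]_m) :
  completely_positive F -> completely_positive G ->
  completely_positive (fun X => F (G X)).
Proof.
move=> hF hG k X hX.
have -> : ampl (fun X => F (G X)) X = ampl F (ampl G X).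
  by rewrite /ampl; apply: eq_mxblock => i j; rewrite mxblockK.
exact/hF/hG.
Qed.

Lemma CP_congr {C : numClosedFieldType} n m (M : 'M[C]_(m, n)) :
  completely_positive (fun X => M *m X *m M^t*).
Proof.
move=> k X hX.
pose D : 'M[C]_(\sum_(i < k) m, \sum_(i < k) n) :=
  \mxblock_(i, j) (if i == j then M else 0).
suff -> : ampl (fun X => M *m X *m M^t*) X = D *m X *m D^t* by apply: psd_congr.
have DtE : D^t* = \mxblock_(i, j) (if i == j then M^t* else 0).
  rewrite /D tr_mxblock map_mxblock; apply: eq_mxblock => i j.
  by rewrite eq_sym; case: eqP => // _; rewrite trmx0 map_mx0.
rewrite DtE -[X in D *m X](submxblockK X) /D !mul_mxblock /ampl.
apply: eq_mxblock => i j.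
rewrite (bigD1 j) //= eqxx [X in _ + X]big1 ?addr0; last first.
  by move=> l /negbTE ->; rewrite mulmx0.
rewrite (bigD1 i) //= eqxx [X in _ + X]big1 ?addr0 //.
by move=> l /negbTE; rewrite eq_sym => ->; rewrite mul0mx.
Qed.

Lemma CP_scale {C : numClosedFieldType} n m (c : C) (F : 'M[C]_n -> 'M[C]_m) :
  0 <= c -> completely_positive F -> completely_positive (fun X => c *: F X).
Proof.
move=> c0 hF; apply: CP_ext (CP_comp (CP_congr (sqrtC c)%:M) hF) => X.
rewrite tr_scalar_mx map_scalar_mx mul_scalar_mx mul_mx_scalar scalerA.
congr (_ *: _); rewrite -[RHS]sqrtCK expr2; congr (_ * _).
by apply: geC0_conj; rewrite sqrtC_ge0.
Qed.

Lemma psd_blk1 {C : numClosedFieldType} m (P : 'M[C]_m) :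
  psdmx (\mxblock_(i < 1, j < 1) P : 'M[C]_(\sum_(i < 1) m)) -> psdmx P.
Proof.
move=> [/hermP hX pX]; split.
  apply/hermP; move: hX; rewrite tr_mxblock map_mxblock.
  by move=> /(congr1 (fun M => submxblock M ord0 ord0)); rewrite !mxblockK.
move=> x; have := pX (\mxrow_(j < 1) x).
have -> : (\mxrow_(j < 1) x)^t* = \mxcol_(i < 1) x^t*.
  by apply/matrixP => i j; rewrite !mxE.
by rewrite mul_mxrow_mxblock mul_mxrow_mxcol !big_ord1.
Qed.

Lemma CP_psd1 {C : numClosedFieldType} n m (F : 'M[C]_n -> 'M[C]_m) :
  completely_positive F -> psdmx (F 1%:M).
Proof.
move=> hF; apply: psd_blk1.
pose E : 'M[C]_(\sum_(i < 1) n, n) := \mxcol_(i < 1) 1%:M.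
have hX : psdmx (\mxblock_(i < 1, j < 1) (1%:M : 'M[C]_n) : 'M[C]_(\sum_(i < 1) n)).
  have -> : (\mxblock_(i < 1, j < 1) (1%:M : 'M[C]_n) : 'M[C]_(\sum_(i < 1) n)) = E *m 1%:M *m E^t*.
    have -> : E^t* = \mxrow_(j < 1) 1%:M.
      rewrite /E tr_mxcol map_mxrow.
      by apply: eq_mxrow => j; rewrite trmx1 map_mx1.
    by rewrite mulmx1 mul_mxcol_mxrow mulmx1.
  exact/psd_congr/psd1.
have := hF 1%N _ hX; rewrite /ampl.
by under eq_mxblock do rewrite mxblockK.
Qed.
Lemma herm_factor {C : numClosedFieldType} m (P : 'M[C]_m) : P \is hermsymmx ->
  exists g : C, 0 < g /\ exists W : 'M[C]_m, 1%:M - g^-1 *: P = W^t* *m W.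
Proof.
move=> hP.
set U := spectralmx P; set d := spectral_diag P.
have hU : U \is unitarymx := spectral_unitarymx P.
have /orthomx_spectralP PE := hermitian_normalmx hP.
have Ui : invmx U = U^t* := invmx_unitary hU.
have UU : U^t* *m U = 1%:M by rewrite -Ui mulVmx ?unitarymx_unit.
have dr : forall i, d 0 i \is Num.real.
  by move=> i; have /mxOverP := hermitian_spectral_diag_real hP; apply.
pose g := 1 + \sum_i `|d 0 i|.
have g0 : 0 < g by rewrite ltr_pwDl ?sumr_ge0.
pose e i := 1 - g^-1 * d 0 i.
have e0 : forall i, 0 <= e i.
  move=> i; rewrite subr_ge0 mulrC ler_pdivrMr // mul1r.
  apply: le_trans (real_ler_norm (dr i)) _.
  apply: le_trans (_ : \sum_j `|d 0 j| <= g); last by rewrite lerDr.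
  by rewrite (bigD1 i) //= lerDl sumr_ge0.
exists g; split => //.
exists (diag_mx (\row_i sqrtC (e i)) *m U).
have -> : 1%:M - g^-1 *: P = U^t* *m diag_mx (\row_i e i) *m U.
  have -> : diag_mx (\row_i e i) = 1%:M - g^-1 *: diag_mx d.
    apply/matrixP => i j; rewrite !mxE; case: eqP => [->|_]; by rewrite /= ?mulr1n ?mulr0n ?mulr0 ?subr0.
  rewrite mulmxBr mulmx1 mulmxBl UU {1}PE Ui -scalemxAr -scalemxAl.
  by [].
rewrite (tC_mul (diag_mx _)) -!mulmxA; congr (_ *m _); rewrite !mulmxA; congr (_ *m _).
rewrite tr_diag_mx map_diag_mx mul_diag_mx.
apply/matrixP => i j; rewrite !mxE.
case: eqP => [->|_]; last by rewrite /= ?mulr0n ?mulr0.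
rewrite /= !mulr1n.
have s0 : 0 <= sqrtC (e j) by rewrite sqrtC_ge0.
rewrite [X in X * _](_ : _ = sqrtC (e j)); last exact: geC0_conj.
by rewrite -expr2 sqrtCK.
Qed.
Definition PsiF {C : numClosedFieldType} n m (Phi : 'M[C]_n -> 'M[C]_m) (g : C)
  (Q : 'M[C]_m) (Y : 'M[C]_(n + 1)) : 'M[C]_m :=
  g^-1 *: Phi (ulsubmx Y) + (drsubmx Y 0 0) *: Q.

Lemma PsiF_lin {C : numClosedFieldType} n m (Phi : {linear 'M[C]_n -> 'M[C]_m}) g Q :
  linear (PsiF Phi g Q).
Proof.
move=> a x y; rewrite /PsiF.
have -> : ulsubmx (a *: x + y) = a *: ulsubmx x + ulsubmx y.
  by apply/matrixP => i j; rewrite !mxE.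
rewrite linearP !mxE.
by rewrite !scalerDr scalerDl !scalerA addrACA [g^-1 * a]mulrC.
Qed.

HB.instance Definition _ {C : numClosedFieldType} n m (Phi : {linear 'M[C]_n -> 'M[C]_m}) g Q :=
  GRing.isLinear.Build C 'M[C]_(n + 1) 'M[C]_m _ (PsiF Phi g Q) (PsiF_lin Phi g Q).

Definition PhiF {C : numClosedFieldType} n m (Psi : 'M[C]_(n + 1) -> 'M[C]_m) (g : C)
  (X : 'M[C]_n) : 'M[C]_m := g *: Psi (block_mx X 0 0 (0 : 'M[C]_1)).

Lemma PhiF_lin {C : numClosedFieldType} n m (Psi : {linear 'M[C]_(n + 1) -> 'M[C]_m}) g :
  linear (PhiF Psi g).
Proof.
move=> a x y; rewrite /PhiF.
have -> : block_mx (a *: x + y) 0 0 (0 : 'M[C]_1) =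
   a *: block_mx x 0 0 (0 : 'M[C]_1) + block_mx y 0 0 0.
  by rewrite scale_block_mx add_block_mx !scaler0 !addr0.
by rewrite linearP scalerDr !scalerA mulrC.
Qed.

HB.instance Definition _ {C : numClosedFieldType} n m (Psi : {linear 'M[C]_(n + 1) -> 'M[C]_m}) g :=
  GRing.isLinear.Build C 'M[C]_n 'M[C]_m _ (PhiF Psi g) (PhiF_lin Psi g).


Theorem theorem4p1 (C : numClosedFieldType) (n m k : nat)
  (A : 'I_k -> 'M[C]_n) (B : 'I_k -> 'M[C]_m)
  (hA : forall j, A j \is hermsymmx) (hB : forall j, B j \is hermsymmx) :
  (exists Phi : {linear 'M[C]_n -> 'M[C]_m},
      completely_positive Phi /\ forall j, Phi (A j) = B j)
  <->
  (exists gamma : C, 0 < gamma /\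
     exists Psi : {linear 'M[C]_(n + 1) -> 'M[C]_m},
       unital Psi /\ completely_positive Psi /\
       forall j, Psi (block_mx (A j) 0 0 (0 : 'M[C]_1)) = gamma^-1 *: B j).
Proof.
split.
- move=> [Phi [hPhi hAB]].
  have [hPh _] := CP_psd1 hPhi.
  have [g [g0 [W hW]]] := herm_factor hPh.
  exists g; split => //.
  exists (PsiF Phi g (1%:M - g^-1 *: Phi 1%:M) : {linear _ -> _}).
  split; [|split].
  + rewrite /unital /= /PsiF.
    have -> : ulsubmx (1%:M : 'M[C]_(n + 1)) = 1%:M.
      by rewrite (scalar_mx_block n 1 1) block_mxKul.
    have -> : (drsubmx (1%:M : 'M[C]_(n + 1))) 0 0 = 1.
      by rewrite (scalar_mx_block n 1 1) block_mxKdr mxE.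
    by rewrite scale1r addrC subrK.
  + pose J : 'M[C]_(n, n + 1) := row_mx 1%:M 0.
    pose E : 'M[C]_(1, n + 1) := row_mx 0 1%:M.
    pose Ml (l : 'I_m) : 'M[C]_(m, n + 1) := (row l W)^t* *m E.
    have g0' : 0 <= g^-1 by rewrite invr_ge0 ltW.
    apply: CP_ext (CP_add (CP_scale g0' (CP_comp hPhi (CP_congr J)))
                     (CP_sum (fun l => CP_congr (Ml l)))) => X.
    rewrite /= /PsiF hW; congr (_ + _).
      congr (_ *: Phi _).
      have -> : J^t* = col_mx 1%:M 0 by rewrite tr_row_mx map_col_mx trmx1 trmx0 map_mx1 map_mx0.
      rewrite -{1}(submxK X) mul_row_block !mul1mx !mul0mx !addr0 mul_row_col.
      by rewrite mulmx1 mulmx0 addr0.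
    have EX : E *m X *m E^t* = (drsubmx X 0 0)%:M.
      have -> : E^t* = col_mx 0 1%:M by rewrite tr_row_mx map_col_mx trmx1 trmx0 map_mx1 map_mx0.
      rewrite -{1}(submxK X) mul_row_block !mul1mx !mul0mx !add0r mul_row_col.
      by rewrite mulmx1 mulmx0 add0r -mx11_scalar.
    have -> : \sum_(l < m) Ml l *m X *m (Ml l)^t* =
              \sum_(l < m) drsubmx X 0 0 *: ((row l W)^t* *m row l W).
      apply: eq_bigr => l _; rewrite /Ml tC_mul trmxCK mulmxA -(mulmxA _ E X).
      by rewrite -(mulmxA _ (E *m X)) EX mul_mx_scalar -scalemxAl.
    rewrite -scaler_sumr; congr (_ *: _).
    apply/matrixP => i j; rewrite summxE !mxE; apply: eq_bigr => l _.
    by rewrite !mxE big_ord1 !mxE.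
  + by move=> j; rewrite /= /PsiF block_mxKul block_mxKdr mxE scale0r addr0 hAB.
- move=> [g [g0 [Psi [hU [hCP hPsi]]]]].
  exists (PhiF Psi g : {linear _ -> _}); split.
  + pose K : 'M[C]_(n + 1, n) := col_mx 1%:M 0.
    apply: CP_ext (CP_scale (ltW g0) (CP_comp hCP (CP_congr K))) => X.
    rewrite /= /PhiF; congr (_ *: Psi _).
    have -> : K^t* = row_mx 1%:M 0 by rewrite tr_col_mx map_row_mx trmx1 trmx0 map_mx1 map_mx0.
    by rewrite mul_col_mx mul1mx mul0mx mul_col_row mulmx1 !mulmx0 mul0mx.
  + move=> j; rewrite /= /PhiF hPsi scalerA mulfV ?scale1r //.
    by rewrite gt_eqF.
Qed.
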